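(* If $\Sigma\subseteq\mathcal L$ is finite and closed under subformulas, then the canonical quasimodel $\mathfrak C/\Sigma$ is a $\Sigma$-quasimodel; in particular its relation $R^+$ is $\omega$-sensible.
   Context: $\mathcal L$: formulas with $\wedge,\vee,\Rightarrow,\Leftarrow,\mathsf X,\mathsf Y,\mathsf G,\mathsf H,\mathsf U,\mathsf S$; $\top:=p_0\Rightarrow p_0$, $\bot:=p_0\Leftarrow p_0$, $\neg\varphi:=\varphi\Rightarrow\bot$. $\mathsf{GTL}$ is the Hilbert calculus: substitution instances of intuitionistic tautologies; $\varphi\Rightarrow(\psi\vee(\varphi\Leftarrow\psi))$; $(\varphi\Rightarrow\psi)\vee(\psi\Rightarrow\varphi)$; $\neg((\varphi\Leftarrow\psi)\wedge(\psi\Leftarrow\varphi))$; $\neg\mathsf X\bot$, $\mathsf X(\varphi\vee\psi)\Rightarrow(\mathsf X\varphi\vee\mathsf X\psi)$, $(\mathsf X\varphi\wedge\mathsf X\psi)\Rightarrow\mathsf X(\varphi\wedge\psi)$, $\mathsf X(\varphi\Rightarrow\psi)\Leftrightarrow(\mathsf X\varphi\Rightarrow\mathsf X\psi)$, $\mathsf G(\varphi\Rightarrow\psi)\Rightarrow(\mathsf G\varphi\Rightarrow\mathsf G\psi)$, $\mathsf G(\varphi\Rightarrow\psi)\Rightarrow(\theta\,\mathsf U\,\varphi\Rightarrow\theta\,\mathsf U\,\psi)$, $\mathsf G(\varphi\Rightarrow\psi)\Rightarrow(\varphi\,\mathsf U\,\theta\Rightarrow\psi\,\mathsf U\,\theta)$,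 $\mathsf G\varphi\Rightarrow\varphi\wedge\mathsf X\mathsf G\varphi$, $\psi\vee(\varphi\wedge\mathsf X(\varphi\,\mathsf U\,\psi))\Rightarrow\varphi\,\mathsf U\,\psi$, $\mathsf G(\varphi\Rightarrow\mathsf X\varphi)\Rightarrow(\varphi\Rightarrow\mathsf G\varphi)$, $\mathsf G(\psi\wedge\mathsf X\varphi\Rightarrow\varphi)\Rightarrow(\psi\,\mathsf U\,\varphi\Rightarrow\varphi)$ and their past versions (with $\mathsf Y,\mathsf H,\mathsf S$); $\varphi\Leftrightarrow\mathsf X\mathsf Y\varphi$, $\varphi\Leftrightarrow\mathsf Y\mathsf X\varphi$; rules: from $\varphi\Rightarrow\psi$ infer $(\varphi\Leftarrow\theta)\Rightarrow(\psi\Leftarrow\theta)$; from $\varphi\Rightarrow\psi\vee\gamma$ infer $(\varphi\Leftarrow\psi)\Rightarrow\gamma$; modus ponens; necessitation for $\mathsf X,\mathsf Y,\mathsf G,\mathsf H$. $\Gamma\vdash\Delta$ iff $\bigwedge\Gamma'\Rightarrow\bigvee\Delta'\in\mathsf{GTL}$ for finite $\Gamma'\subseteq\Gamma,\Delta'\subseteq\Delta$. $\Sigma$-types, $\Sigma$-labelled spaces, convex/fully confluent/bi-serial/sensible relations, $\Sigma$-labelled systems: for subformula-closed $\Sigma$, a $\Sigma$-type is $\Phi\subseteq\Sigma$ with the Boolean closure conditions for $\wedge,\vee$, ($\varphi\Rightarrow\psi\in\Phi$ implies $\varphi\notin\Phi$ or $\psi\in\Phi$; $\psi\in\Phi$ implies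 $\varphi\Rightarrow\psi\in\Phi$), ($\varphi\Leftarrow\psi\in\Phi$ implies $\varphi\in\Phi$; $\varphi\in\Phi,\psi\notin\Phi$ imply $\varphi\Leftarrow\psi\in\Phi$). A $\Sigma$-labelled space is $(W,\le,\ell)$ with $(W,\le)$ a disjoint union of linear posets, $\ell$ into $\Sigma$-types, $w\le v\Rightarrow\ell(w)\supseteq\ell(v)$, $\Rightarrow$-formulas outside $\ell(w)$ witnessed at some $v\le w$ ($\varphi\in\ell(v),\psi\notin\ell(v)$), $\Leftarrow$-formulas in $\ell(w)$ witnessed at some $v\ge w$. A relation $R$ is convex (images/preimages of points convex), fully confluent (forth–down: $x\le x'Ry'\Rightarrow\exists y\,xRy\le y'$; forth–up: $x'\ge xRy\Rightarrow\exists y'\,x'Ry'\ge y$; back–down: $x'Ry'\ge y\Rightarrow\exists x\,x'\ge xRy$; back–up: $xRy\le y'\Rightarrow\exists x'\,x\le x'Ry'$), bi-serial, and sensible (for each $wRv$: $\mathsf X\varphi\in\ell(w)\iff\varphi\in\ell(v)$; $\mathsf Y\varphi\in\ell(v)\iff\varphi\in\ell(w)$; $\mathsf G\varphi\in\ell(w)\iff\varphi\in\ell(w)\wedge\mathsf G\varphi\in\ell(v)$; $\mathsf H\varphi\in\ell(v)\iff\varphi\in\ell(v)\wedge\mathsf H\varphi\in\ell(w)$; $\varphi\,\mathsf U\,\psi\in\ell(w)\iff\psi\in\ell(w)\vee(\varphi\in\ell(w)\wedge\varphi\,\mathsf U\,\psi\in\ell(v))$; $\varphi\,\mathsf S\,\psi\in\ell(v)\iff\psi\in\ell(v)\vee(\varphi\in\ell(v)\wedge\varphi\,\mathsf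 S\,\psi\in\ell(w))$, for formulas in $\Sigma$). Labelled system: labelled space plus such a relation. $\omega$-sensible: $\mathsf G\varphi\in\Sigma\setminus\ell(w)$ gives $v$ with $wR^nv$, $\varphi\notin\ell(v)$; $\mathsf H\varphi\in\Sigma\setminus\ell(w)$ gives $v$ with $vR^nw$, $\varphi\notin\ell(v)$; $\varphi\,\mathsf U\,\psi\in\ell(w)$ gives $v$ with $wR^nv$, $\psi\in\ell(v)$; $\varphi\,\mathsf S\,\psi\in\ell(w)$ gives $v$ with $vR^nw$, $\psi\in\ell(v)$ ($n\ge0$). A $\Sigma$-quasimodel is a $\Sigma$-labelled system with $\omega$-sensible relation. Canonical quasimodel: $\mathrm{Type}_\infty$ is the set of $\mathcal L$-types $\Phi$ with $\Phi\nvdash\mathcal L\setminus\Phi$; $\Phi\le\Psi$ iff $\Phi\supseteq\Psi$; $\ell(\Phi)=\Phi\cap\Sigma$; $S(\Phi)=\{\varphi:\mathsf X\varphi\in\Phi\}$. $\mathfrak C/\Sigma$ is the quotient: $L(\Phi)=\{\ell(\Psi):\Psi\le\Phi$ or $\Phi\le\Psi\}$; $\Phi\sim\Psi$ iff $\ell$ and $L$ agree; $[\Phi]\le[\Psi]$ iff $L(\Phi)=L(\Psi)$ and $\ell(\Phi)\supseteq\ell(\Psi)$; $\ell([\Phi])=\ell(\Phi)$; $R_0$ smallest with $[\Phi]R_0[S(\Phi)]$; $XR^+Y$ iff there are $X_1\le X\le X_2$, $Y_1\le Y\le Y_2$ with $X_2R_0Y_1$ and $X_1R_0Y_2$. *)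

(* Defs.v *)
From Stdlib Require Import List.
Import ListNotations.

Inductive form : Type :=
| Var : nat -> form
| And : form -> form -> form
| Or : form -> form -> form
| Imp : form -> form -> form
| Coimp : form -> form -> form    (* phi <= psi  (co-implication) *)
| Next : form -> form
| Prev : form -> form
| Glob : form -> form
| Hist : form -> form
| Until : form -> form -> form
| Since : form -> form -> form.

Definition Top : form := Imp (Var 0) (Var 0).
Definition Bot : form := Coimp (Var 0) (Var 0).
Definition Neg (f : form) : form := Imp f Bot.
Definition Iff (a b : form) : form := And (Imp a b) (Imp b a).

Inductive ipf : Type :=
| IVar : nat -> ipf
| IBot : ipf
| IAnd : ipf -> ipf -> ipf
| IOr : ipf -> ipf -> ipf
| IImp : ipf -> ipf -> ipf.

Fixpoint iforce {K : Type} (r : K -> K -> Prop) (V : nat -> K -> Prop)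
  (k : K) (a : ipf) : Prop :=
  match a with
  | IVar n => V n k
  | IBot => False
  | IAnd a b => iforce r V k a /\ iforce r V k b
  | IOr a b => iforce r V k a \/ iforce r V k b
  | IImp a b => forall k', r k k' -> iforce r V k' a -> iforce r V k' b
  end.

Definition int_taut (a : ipf) : Prop :=
  forall (K : Type) (r : K -> K -> Prop) (V : nat -> K -> Prop),
    (forall k, r k k) ->
    (forall x y z, r x y -> r y z -> r x z) ->
    (forall n x y, r x y -> V n x -> V n y) ->
    forall k, iforce r V k a.

Fixpoint isubst (s : nat -> form) (a : ipf) : form :=
  match a with
  | IVar n => s n
  | IBot => Bot
  | IAnd a b => And (isubst s a) (isubst s b)
  | IOr a b => Or (isubst s a) (isubst s b)
  | IImp a b => Imp (isubst s a) (isubst s b)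
  end.

(** * Temporal axioms, parametrised by (X,G,U); past versions use (Y,H,S). *)
Inductive tax (N : form -> form) (B : form -> form) (W : form -> form -> form)
  : form -> Prop :=
| tax_nbot : tax N B W (Neg (N Bot))
| tax_or : forall a b, tax N B W (Imp (N (Or a b)) (Or (N a) (N b)))
| tax_and : forall a b, tax N B W (Imp (And (N a) (N b)) (N (And a b)))
| tax_imp : forall a b, tax N B W (Iff (N (Imp a b)) (Imp (N a) (N b)))
| tax_K : forall a b, tax N B W (Imp (B (Imp a b)) (Imp (B a) (B b)))
| tax_WR : forall a b c, tax N B W (Imp (B (Imp a b)) (Imp (W c a) (W c b)))
| tax_WL : forall a b c, tax N B W (Imp (B (Imp a b)) (Imp (W a c) (W b c)))
| tax_Bfix : forall a, tax N B W (Imp (B a) (And a (N (B a))))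
| tax_Wfix : forall a b, tax N B W (Imp (Or b (And a (N (W a b)))) (W a b))
| tax_Bind : forall a, tax N B W (Imp (B (Imp a (N a))) (Imp a (B a)))
| tax_Wind : forall a b, tax N B W (Imp (B (Imp (And b (N a)) a)) (Imp (W b a) a)).

Inductive GTL : form -> Prop :=
| g_int : forall a s, int_taut a -> GTL (isubst s a)
| g_coimp1 : forall a b, GTL (Imp a (Or b (Coimp a b)))
| g_lin : forall a b, GTL (Or (Imp a b) (Imp b a))
| g_coimp2 : forall a b, GTL (Neg (And (Coimp a b) (Coimp b a)))
| g_fut : forall f, tax Next Glob Until f -> GTL f
| g_past : forall f, tax Prev Hist Since f -> GTL f
| g_XY : forall a, GTL (Iff a (Next (Prev a)))
| g_YX : forall a, GTL (Iff a (Prev (Next a)))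
| g_coimp_mono : forall a b c, GTL (Imp a b) -> GTL (Imp (Coimp a c) (Coimp b c))
| g_coimp_res : forall a b c, GTL (Imp a (Or b c)) -> GTL (Imp (Coimp a b) c)
| g_mp : forall a b, GTL (Imp a b) -> GTL a -> GTL b
| g_necX : forall a, GTL a -> GTL (Next a)
| g_necY : forall a, GTL a -> GTL (Prev a)
| g_necG : forall a, GTL a -> GTL (Glob a)
| g_necH : forall a, GTL a -> GTL (Hist a).

Definition bigAnd (l : list form) : form := fold_right And Top l.
Definition bigOr (l : list form) : form := fold_right Or Bot l.

Definition entails (G D : form -> Prop) : Prop :=
  exists G' D' : list form,
    (forall f, In f G' -> G f) /\ (forall f, In f D' -> D f) /\
    GTL (Imp (bigAnd G') (bigOr D')).

Definition finite_set (S : form -> Prop) : Prop :=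
  exists l : list form, forall f, S f <-> In f l.

Definition subform_closed (S : form -> Prop) : Prop :=
  forall f, S f ->
    match f with
    | Var _ => True
    | And a b | Or a b | Imp a b | Coimp a b | Until a b | Since a b => S a /\ S b
    | Next a | Prev a | Glob a | Hist a => S a
    end.

Definition is_type (Sg : form -> Prop) (P : form -> Prop) : Prop :=
  (forall f, P f -> Sg f) /\
  (forall a b, Sg (And a b) -> (P (And a b) <-> P a /\ P b)) /\
  (forall a b, Sg (Or a b) -> (P (Or a b) <-> P a \/ P b)) /\
  (forall a b, Sg (Imp a b) -> P (Imp a b) -> ~ P a \/ P b) /\
  (forall a b, Sg (Imp a b) -> P b -> P (Imp a b)) /\
  (forall a b, Sg (Coimp a b) -> P (Coimp a b) -> P a) /\
  (forall a b, Sg (Coimp a b) -> P a -> ~ P b -> P (Coimp a b)).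

Section Abstract.
Context {W : Type}.

Definition comparable (le : W -> W -> Prop) (x y : W) : Prop := le x y \/ le y x.

(** (W, le) is a disjoint union of linear posets: a partial order whose
    comparability relation is transitive (components are chains). *)
Definition disj_union_linear (le : W -> W -> Prop) : Prop :=
  (forall x, le x x) /\
  (forall x y, le x y -> le y x -> x = y) /\
  (forall x y z, le x y -> le y z -> le x z) /\
  (forall x y z, comparable le x y -> comparable le y z -> comparable le x z).

Definition labelled_space (Sg : form -> Prop) (le : W -> W -> Prop)
  (lab : W -> form -> Prop) : Prop :=
  disj_union_linear le /\
  (forall w, is_type Sg (lab w)) /\
  (forall w v, le w v -> forall f, lab v f -> lab w f) /\
  (forall w a b, Sg (Imp a b) -> ~ lab w (Imp a b) ->
      exists v, le v w /\ lab v a /\ ~ lab v b) /\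
  (forall w a b, lab w (Coimp a b) ->
      exists v, le w v /\ lab v a /\ ~ lab v b).

Definition convex_rel (le R : W -> W -> Prop) : Prop :=
  (forall w v1 u v2, R w v1 -> R w v2 -> le v1 u -> le u v2 -> R w u) /\
  (forall v w1 u w2, R w1 v -> R w2 v -> le w1 u -> le u w2 -> R u v).

Definition fully_confluent (le R : W -> W -> Prop) : Prop :=
  (forall x x' y', le x x' -> R x' y' -> exists y, R x y /\ le y y') /\
  (forall x x' y, le x x' -> R x y -> exists y', R x' y' /\ le y y') /\
  (forall x' y' y, R x' y' -> le y y' -> exists x, le x x' /\ R x y) /\
  (forall x y y', R x y -> le y y' -> exists x', le x x' /\ R x' y').

Definition bi_serial (R : W -> W -> Prop) : Prop :=
  forall w, (exists v, R w v) /\ (exists u, R u w).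

Definition sensible (Sg : form -> Prop) (lab : W -> form -> Prop)
  (R : W -> W -> Prop) : Prop :=
  forall w v, R w v ->
  (forall a, Sg (Next a) -> (lab w (Next a) <-> lab v a)) /\
  (forall a, Sg (Prev a) -> (lab v (Prev a) <-> lab w a)) /\
  (forall a, Sg (Glob a) -> (lab w (Glob a) <-> lab w a /\ lab v (Glob a))) /\
  (forall a, Sg (Hist a) -> (lab v (Hist a) <-> lab v a /\ lab w (Hist a))) /\
  (forall a b, Sg (Until a b) ->
     (lab w (Until a b) <-> lab w b \/ (lab w a /\ lab v (Until a b)))) /\
  (forall a b, Sg (Since a b) ->
     (lab v (Since a b) <-> lab v b \/ (lab v a /\ lab w (Since a b)))).

Fixpoint iter_rel (R : W -> W -> Prop) (n : nat) : W -> W -> Prop :=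
  match n with
  | O => fun x y => x = y
  | S n => fun x z => exists y, R x y /\ iter_rel R n y z
  end.

Definition omega_sensible (Sg : form -> Prop) (lab : W -> form -> Prop)
  (R : W -> W -> Prop) : Prop :=
  (forall w a, Sg (Glob a) -> ~ lab w (Glob a) ->
     exists n v, iter_rel R n w v /\ ~ lab v a) /\
  (forall w a, Sg (Hist a) -> ~ lab w (Hist a) ->
     exists n v, iter_rel R n v w /\ ~ lab v a) /\
  (forall w a b, lab w (Until a b) ->
     exists n v, iter_rel R n w v /\ lab v b) /\
  (forall w a b, lab w (Since a b) ->
     exists n v, iter_rel R n v w /\ lab v b).

Definition labelled_system (Sg : form -> Prop) (le : W -> W -> Prop)
  (lab : W -> form -> Prop) (R : W -> W -> Prop) : Prop :=
  labelled_space Sg le lab /\ convex_rel le R /\ fully_confluent le R /\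
  bi_serial R /\ sensible Sg lab R.

Definition quasimodel (Sg : form -> Prop) (le : W -> W -> Prop)
  (lab : W -> form -> Prop) (R : W -> W -> Prop) : Prop :=
  labelled_system Sg le lab R /\ omega_sensible Sg lab R.

End Abstract.

Definition all_forms : form -> Prop := fun _ => True.

Definition tinf (P : form -> Prop) : Prop :=
  is_type all_forms P /\ ~ entails P (fun f => ~ P f).

(** Phi <= Psi iff Phi contains Psi *)
Definition cle (P Q : form -> Prop) : Prop := forall f, Q f -> P f.

Definition clab (Sg : form -> Prop) (P : form -> Prop) : form -> Prop :=
  fun f => P f /\ Sg f.

Definition csucc (P : form -> Prop) : form -> Prop := fun f => P (Next f).

Definition seteq (A B : form -> Prop) : Prop := forall f, A f <-> B f.

Definition Lset (Sg : form -> Prop) (P : form -> Prop) : (form -> Prop) -> Prop :=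
  fun A => exists Q, tinf Q /\ (cle Q P \/ cle P Q) /\ seteq A (clab Sg Q).

Definition Lseteq (L1 L2 : (form -> Prop) -> Prop) : Prop :=
  forall A, L1 A <-> L2 A.

Definition csim (Sg : form -> Prop) (P Q : form -> Prop) : Prop :=
  seteq (clab Sg P) (clab Sg Q) /\ Lseteq (Lset Sg P) (Lset Sg Q).

Definition cls (Sg : form -> Prop) (P : form -> Prop) : (form -> Prop) -> Prop :=
  fun Q => tinf Q /\ csim Sg P Q.

Definition qpt (Sg : form -> Prop) : Type :=
  { C : (form -> Prop) -> Prop |
    exists P, tinf P /\ forall Q, C Q <-> cls Sg P Q }.

Definition qle (Sg : form -> Prop) (X Y : qpt Sg) : Prop :=
  exists P Q, proj1_sig X P /\ proj1_sig Y Q /\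
    Lseteq (Lset Sg P) (Lset Sg Q) /\ cle (clab Sg P) (clab Sg Q).

Definition qlab (Sg : form -> Prop) (X : qpt Sg) : form -> Prop :=
  fun f => Sg f /\ exists P, proj1_sig X P /\ P f.

Definition R0 (Sg : form -> Prop) (X Y : qpt Sg) : Prop :=
  exists P, proj1_sig X P /\ proj1_sig Y (csucc P).

Definition Rplus (Sg : form -> Prop) (X Y : qpt Sg) : Prop :=
  exists X1 X2 Y1 Y2,
    qle Sg X1 X /\ qle Sg X X2 /\ qle Sg Y1 Y /\ qle Sg Y Y2 /\
    R0 Sg X2 Y1 /\ R0 Sg X1 Y2.

(* Main.v *)
Require Import Defs.
From Stdlib Require Import List Classical Arith PeanoNat Lia.
From Stdlib Require Import FunctionalExtensionality PropExtensionality ProofIrrelevance.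
Import ListNotations.

Lemma iforce_mono {K} (r : K -> K -> Prop) V
  (Ht : forall x y z, r x y -> r y z -> r x z)
  (Hm : forall n x y, r x y -> V n x -> V n y) :
  forall a k k', r k k' -> iforce r V k a -> iforce r V k' a.
Proof.
  induction a; simpl; intros k k' Hk H; try tauto.
  - eauto.
  - destruct H; split; eauto.
  - destruct H; [left|right]; eauto.
  - intros k'' H1 H2. apply (H k''); eauto.
Qed.

Ltac taut :=
  let K := fresh "K" in let r := fresh "r" in let V := fresh "V" in
  let Hr := fresh "Hr" in let Ht := fresh "Ht" in let Hm := fresh "Hm" in
  intros K r V Hr Ht Hm; simpl;
  pose proof (iforce_mono r V Ht Hm) as HM; simpl in HM;
  repeat match goal with
  | |- forall _, _ => intro
  | |- _ /\ _ => split
  | H : _ /\ _ |- _ => destruct H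
  | H : False |- _ => destruct H
  | H : _ \/ _ |- _ => destruct H
  end;
  eauto 7.

Definition sb (l : list form) : nat -> form := fun n => nth n l Bot.

Lemma T1 (A B : ipf) (l : list form) : int_taut (IImp A B) -> GTL (isubst (sb l) A) -> GTL (isubst (sb l) B).
Proof. intros T H. exact (g_mp _ _ (g_int _ (sb l) T) H). Qed.
Lemma T2 (A B C : ipf) (l : list form) : int_taut (IImp A (IImp B C)) ->
  GTL (isubst (sb l) A) -> GTL (isubst (sb l) B) -> GTL (isubst (sb l) C).
Proof. intros T H1 H2. exact (g_mp _ _ (g_mp _ _ (g_int _ (sb l) T) H1) H2). Qed.
Lemma T0 (A : ipf) (l : list form) : int_taut A -> GTL (isubst (sb l) A).
Proof. intros T. exact (g_int _ (sb l) T). Qed.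

Notation v0 := (IVar 0). Notation v1 := (IVar 1). Notation v2 := (IVar 2).
Notation v3 := (IVar 3). Notation v4 := (IVar 4).

Lemma imp_trans a b c : GTL (Imp a b) -> GTL (Imp b c) -> GTL (Imp a c).
Proof. apply (T2 (IImp v0 v1) (IImp v1 v2) (IImp v0 v2) [a;b;c]). taut. Qed.
Lemma andI a b c : GTL (Imp a b) -> GTL (Imp a c) -> GTL (Imp a (And b c)).
Proof. apply (T2 (IImp v0 v1) (IImp v0 v2) (IImp v0 (IAnd v1 v2)) [a;b;c]). taut. Qed.
Lemma orE a b c : GTL (Imp a c) -> GTL (Imp b c) -> GTL (Imp (Or a b) c).
Proof. apply (T2 (IImp v0 v2) (IImp v1 v2) (IImp (IOr v0 v1) v2) [a;b;c]).
  taut. Qed.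
Lemma andl a b : GTL (Imp (And a b) a).
Proof. apply (T0 (IImp (IAnd v0 v1) v0) [a;b]). taut. Qed.
Lemma andr a b : GTL (Imp (And a b) b).
Proof. apply (T0 (IImp (IAnd v0 v1) v1) [a;b]). taut. Qed.
Lemma orl a b : GTL (Imp a (Or a b)).
Proof. apply (T0 (IImp v0 (IOr v0 v1)) [a;b]). taut. Qed.
Lemma orr a b : GTL (Imp b (Or a b)).
Proof. apply (T0 (IImp v1 (IOr v0 v1)) [a;b]). taut. Qed.
Lemma imp_refl a : GTL (Imp a a).
Proof. apply (T0 (IImp v0 v0) [a]). taut. Qed.
Lemma gtl_top : GTL Top.
Proof. apply imp_refl. Qed.
Lemma botE a : GTL (Imp Bot a).
Proof. apply (T0 (IImp IBot v0) [a]). taut. Qed.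
Lemma weak a b : GTL b -> GTL (Imp a b).
Proof. apply (T1 v1 (IImp v0 v1) [a;b]). taut. Qed.
Lemma mp2 a b c : GTL (Imp (And a b) c) -> GTL (Imp a (Imp b c)).
Proof. apply (T1 (IImp (IAnd v0 v1) v2) (IImp v0 (IImp v1 v2)) [a;b;c]). taut. Qed.
Lemma imp_mp a b : GTL (Imp (And a (Imp a b)) b).
Proof. apply (T0 (IImp (IAnd v0 (IImp v0 v1)) v1) [a;b]). taut. Qed.
Lemma cut_rule f x d y e : GTL (Imp (And f x) d) -> GTL (Imp y (Or f e)) ->
  GTL (Imp (And x y) (Or d e)).
Proof. apply (T2 (IImp (IAnd v0 v1) v2) (IImp v3 (IOr v0 v4)) (IImp (IAnd v1 v3) (IOr v2 v4)) [f;x;d;y;e]).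
  taut. destruct (H2 k'1 H3 H5); [left; apply H0; eauto | right; auto]. Qed.
Lemma and_mono a b c d : GTL (Imp a b) -> GTL (Imp c d) -> GTL (Imp (And a c) (And b d)).
Proof. apply (T2 (IImp v0 v1) (IImp v2 v3) (IImp (IAnd v0 v2) (IAnd v1 v3)) [a;b;c;d]). taut. Qed.
Lemma or_mono a b c d : GTL (Imp a b) -> GTL (Imp c d) -> GTL (Imp (Or a c) (Or b d)).
Proof. apply (T2 (IImp v0 v1) (IImp v2 v3) (IImp (IOr v0 v2) (IOr v1 v3)) [a;b;c;d]).
  taut. Qed.
Lemma or_assoc1 a b c : GTL (Imp (Or (Or a b) c) (Or a (Or b c))).
Proof. apply (T0 (IImp (IOr (IOr v0 v1) v2) (IOr v0 (IOr v1 v2))) [a;b;c]). taut. Qed.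
Lemma or_assoc2 a b c : GTL (Imp (Or a (Or b c)) (Or (Or a b) c)).
Proof. apply (T0 (IImp (IOr v0 (IOr v1 v2)) (IOr (IOr v0 v1) v2)) [a;b;c]). taut. Qed.
Lemma or_comm a b : GTL (Imp (Or a b) (Or b a)).
Proof. apply (T0 (IImp (IOr v0 v1) (IOr v1 v0)) [a;b]). taut. Qed.
Lemma or_idem a : GTL (Imp (Or a a) a).
Proof. apply orE; apply imp_refl. Qed.
Lemma and_assoc1 a b c : GTL (Imp (And (And a b) c) (And a (And b c))).
Proof. apply (T0 (IImp (IAnd (IAnd v0 v1) v2) (IAnd v0 (IAnd v1 v2))) [a;b;c]). taut. Qed.
Lemma and_assoc2 a b c : GTL (Imp (And a (And b c)) (And (And a b) c)).
Proof. apply (T0 (IImp (IAnd v0 (IAnd v1 v2)) (IAnd (IAnd v0 v1) v2)) [a;b;c]). taut. Qed.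
Lemma and_comm a b : GTL (Imp (And a b) (And b a)).
Proof. apply (T0 (IImp (IAnd v0 v1) (IAnd v1 v0)) [a;b]). taut. Qed.
Lemma iff1 a b : GTL (Iff a b) -> GTL (Imp a b).
Proof. intro H. exact (g_mp _ _ (andl _ _) H). Qed.
Lemma iff2 a b : GTL (Iff a b) -> GTL (Imp b a).
Proof. intro H. exact (g_mp _ _ (andr _ _) H). Qed.
Lemma kax a b : GTL (Imp b (Imp a b)).
Proof. apply (T0 (IImp v1 (IImp v0 v1)) [a;b]). taut. Qed.

Section Temp.
Variables (N B : form -> form) (W : form -> form -> form).
Hypothesis HT : forall f, tax N B W f -> GTL f.
Hypothesis HnN : forall a, GTL a -> GTL (N a).
Hypothesis HnB : forall a, GTL a -> GTL (B a).

Lemma Nmono a b : GTL (Imp a b) -> GTL (Imp (N a) (N b)).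
Proof. intro H. apply (g_mp _ _ (iff1 _ _ (HT _ (tax_imp _ _ _ a b))) (HnN _ H)). Qed.
Lemma Bmono a b : GTL (Imp a b) -> GTL (Imp (B a) (B b)).
Proof. intro H. apply (g_mp _ _ (HT _ (tax_K _ _ _ a b)) (HnB _ H)). Qed.
Lemma B_elim a : GTL (Imp (B a) a).
Proof. eapply imp_trans. apply HT, tax_Bfix. apply andl. Qed.
Lemma B_step a : GTL (Imp (B a) (N (B a))).
Proof. eapply imp_trans. apply HT, tax_Bfix. apply andr. Qed.
Lemma B_ind p q : GTL (Imp p (N p)) -> GTL (Imp p q) -> GTL (Imp p (B q)).
Proof. intros H1 H2. eapply imp_trans. apply (g_mp _ _ (HT _ (tax_Bind _ _ _ p)) (HnB _ H1)).
  apply Bmono, H2. Qed.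
Lemma B_fold a : GTL (Imp (And a (N (B a))) (B a)).
Proof. apply B_ind. eapply imp_trans. apply andr. apply Nmono. apply HT, tax_Bfix. apply andl. Qed.
Lemma W_b a b : GTL (Imp b (W a b)).
Proof. eapply imp_trans. apply orl. apply HT, tax_Wfix. Qed.
Lemma W_a a b : GTL (Imp (And a (N (W a b))) (W a b)).
Proof. eapply imp_trans. apply orr. apply HT, tax_Wfix. Qed.
Lemma W_ind a b th : GTL (Imp b th) -> GTL (Imp (And a (N th)) th) -> GTL (Imp (W a b) th).
Proof. intros H1 H2. eapply imp_trans. apply (g_mp _ _ (HT _ (tax_WR _ _ _ b th a)) (HnB _ H1)).
  apply (g_mp _ _ (HT _ (tax_Wind _ _ _ th a)) (HnB _ H2)). Qed.
Lemma W_unfold a b : GTL (Imp (W a b) (Or b (And a (N (W a b))))).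
Proof. apply W_ind. apply orl. eapply imp_trans; [|apply orr]. apply and_mono. apply imp_refl.
  apply Nmono. apply HT, tax_Wfix. Qed.
End Temp.

Definition HTf : forall f, tax Next Glob Until f -> GTL f := g_fut.
Definition HTp : forall f, tax Prev Hist Since f -> GTL f := g_past.

Lemma coimp_elim a b : GTL (Imp (Coimp a b) a).
Proof. apply g_coimp_res. apply orr. Qed.

Definition Cons (P : form -> Prop) : Prop := ~ entails P (fun f => ~ P f).

Lemma entails_mono (G D G2 D2 : form -> Prop) : (forall f, G f -> G2 f) -> (forall f, D f -> D2 f) ->
  entails G D -> entails G2 D2.
Proof. intros h1 h2 [G' [D' [a [b c]]]]. exists G', D'. repeat split; auto. Qed.

Section Cons.
Variable P : form -> Prop.
Hypothesis HP : Cons P.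

Lemma cl_main G f : (forall g, In g G -> P g) -> GTL (Imp (bigAnd G) f) -> P f.
Proof. intros H1 H2. apply NNPP; intro Hf. apply HP. exists G, [f]. repeat split; auto.
  intros g [<-|[]]; auto. simpl. eapply imp_trans. apply H2. apply orl. Qed.
Lemma cl0 f : GTL f -> P f.
Proof. intro H. apply (cl_main []). simpl; tauto. apply weak, H. Qed.
Lemma cl1 a f : P a -> GTL (Imp a f) -> P f.
Proof. intros H1 H2. apply (cl_main [a]). intros g [<-|[]]; auto. simpl.
  eapply imp_trans. apply andl. apply H2. Qed.
Lemma cl2 a b f : P a -> P b -> GTL (Imp (And a b) f) -> P f.
Proof. intros H1 H2 H3. apply (cl_main [a;b]). intros g [<-|[<-|[]]]; auto. simpl.
  eapply imp_trans; [|apply H3]. apply and_mono. apply imp_refl. apply andl. Qed.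
Lemma cl_nbot : ~ P Bot.
Proof. intro H. apply HP. exists [Bot], []. repeat split. intros g [<-|[]]; auto. intros g [].
  simpl. apply andl. Qed.
Lemma cl_prime a b : P (Or a b) -> P a \/ P b.
Proof. intro H. apply NNPP; intro Hn. apply HP. exists [Or a b], [a;b]. repeat split.
  intros g [<-|[]]; auto. intros g [<-|[<-|[]]]; tauto. simpl.
  eapply imp_trans. apply andl. apply or_mono. apply imp_refl. apply orl. Qed.
Lemma cl_coimp a b : P a -> ~ P b -> P (Coimp a b).
Proof. intros H1 H2. apply NNPP; intro Hn. apply HP. exists [a], [b; Coimp a b]. repeat split.
  intros g [<-|[]]; auto. intros g [<-|[<-|[]]]; tauto. simpl.
  eapply imp_trans. apply andl. eapply imp_trans. apply g_coimp1.
  apply or_mono. apply imp_refl. apply orl. Qed.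
Lemma cl_mp a b : P a -> P (Imp a b) -> P b.
Proof. intros H1 H2. apply (cl2 _ _ _ H1 H2). apply imp_mp. Qed.

Lemma cons_type : is_type all_forms P.
Proof.
  refine (conj _ (conj _ (conj _ (conj _ (conj _ (conj _ _)))))).
  - intros; exact I.
  - intros a b _; split. intro H; split; (eapply cl1; [exact H|]). apply andl. apply andr.
    intros [h1 h2]. apply (cl2 a b); auto. apply imp_refl.
  - intros a b _; split. apply cl_prime.
    intros [h|h]. apply (cl1 a); auto; apply orl. apply (cl1 b); auto; apply orr.
  - intros a b _ H. destruct (classic (P a)); [right; eapply cl_mp; eauto| left; auto].
  - intros a b _ H. apply (cl1 b); auto. apply kax.
  - intros a b _ H. apply (cl1 (Coimp a b)); auto. apply coimp_elim.
  - intros a b _ H1 H2. apply cl_coimp; auto.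
Qed.

Lemma cl_bigAnd l : P (bigAnd l) <-> forall g, In g l -> P g.
Proof. induction l; simpl. split. intros; tauto. intros; apply cl0, gtl_top.
  split. intros H g [<-|Hg]. eapply cl1; eauto; apply andl. apply IHl; auto. eapply cl1; eauto; apply andr.
  intros H. eapply cl2. apply H; auto. apply IHl; auto. apply imp_refl. Qed.
Lemma cl_bigOr l : P (bigOr l) <-> exists g, In g l /\ P g.
Proof. induction l; simpl. split. intro H; destruct (cl_nbot H). intros [g [[] _]].
  split. intro H. destruct (cl_prime _ _ H). eauto. destruct (proj1 IHl H0) as [g [? ?]]; eauto.
  intros [g [[<-|Hg] Pg]]. eapply cl1; eauto; apply orl. eapply cl1. apply IHl; eauto. apply orr. Qed.
End Cons.

Lemma cons_tinf P : Cons P -> tinf P.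
Proof. intro H. split; auto. apply cons_type; auto. Qed.

(** * Lindenbaum *)
Lemma t_and3a f x y : GTL (Imp (And f (And x y)) x).
Proof. apply (T0 (IImp (IAnd v0 (IAnd v1 v2)) v1) [f;x;y]). taut. Qed.
Lemma t_and3b f x y : GTL (Imp (And f (And x y)) (And f y)).
Proof. apply (T0 (IImp (IAnd v0 (IAnd v1 v2)) (IAnd v0 v2)) [f;x;y]). taut. Qed.

Definition add (G : form -> Prop) f : form -> Prop := fun h => G h \/ h = f.

Lemma split_and (G : form -> Prop) f L : (forall x, In x L -> G x \/ x = f) ->
  exists L1, (forall x, In x L1 -> G x) /\ GTL (Imp (And f (bigAnd L1)) (bigAnd L)).
Proof.
  induction L as [|x L IH]; intro H.
  - exists []. split. intros _ []. simpl. apply weak, gtl_top.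
  - destruct IH as [L1 [H1 H2]]. intros; apply H; simpl; auto.
    destruct (H x (or_introl eq_refl)) as [Gx| ->].
    + exists (x :: L1). split. intros y [<-|Hy]; auto. simpl.
      apply andI. apply t_and3a. eapply imp_trans. apply t_and3b. apply H2.
    + exists L1. split; auto. simpl. apply andI. apply andl. apply H2.
Qed.

Lemma split_or (D : form -> Prop) f L : (forall x, In x L -> D x \/ x = f) ->
  exists L1, (forall x, In x L1 -> D x) /\ GTL (Imp (bigOr L) (Or f (bigOr L1))).
Proof.
  induction L as [|x L IH]; intro H.
  - exists []. split. intros _ []. simpl. apply botE.
  - destruct IH as [L1 [H1 H2]]. intros; apply H; simpl; auto.
    destruct (H x (or_introl eq_refl)) as [Dx| ->].
    + exists (x :: L1). split. intros y [<-|Hy]; auto. simpl.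
      apply orE. eapply imp_trans. apply orl. apply orr.
      eapply imp_trans. apply H2. apply or_mono. apply imp_refl. apply orr.
    + exists L1. split; auto. simpl. apply orE. apply orl. apply H2.
Qed.

Lemma app_and L1 L2 : GTL (Imp (bigAnd (L1 ++ L2)) (And (bigAnd L1) (bigAnd L2))).
Proof. induction L1; simpl. apply andI. apply weak, gtl_top. apply imp_refl.
  eapply imp_trans. apply and_mono. apply imp_refl. apply IHL1. apply and_assoc2. Qed.
Lemma app_or L1 L2 : GTL (Imp (Or (bigOr L1) (bigOr L2)) (bigOr (L1 ++ L2))).
Proof. induction L1; simpl. apply orE. apply botE. apply imp_refl.
  eapply imp_trans. apply or_assoc1. apply or_mono. apply imp_refl. apply IHL1. Qed.

Lemma cut_ent G D f : entails (add G f) D -> entails G (add D f) -> entails G D.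
Proof.
  intros [G1 [D1 [h1 [h2 h3]]]] [G2 [D2 [k1 [k2 k3]]]].
  destruct (split_and G f G1 h1) as [L1 [l1 l2]].
  destruct (split_or D f D2 k2) as [M1 [m1 m2]].
  exists (L1 ++ G2), (D1 ++ M1). repeat split.
  - intros x Hx. apply in_app_or in Hx. destruct Hx; auto.
  - intros x Hx. apply in_app_or in Hx. destruct Hx; auto.
  - eapply imp_trans. apply app_and. eapply imp_trans; [|apply app_or].
    apply (cut_rule f). eapply imp_trans. apply l2. apply h3.
    eapply imp_trans. apply k3. apply m2.
Qed.

Fixpoint flist (n : nat) : list form :=
  match n with
  | 0 => []
  | S m => let L := flist m in
      map Var (seq 0 n) ++ L ++
      flat_map (fun a => [Next a; Prev a; Glob a; Hist a]) L ++
      flat_map (fun a => flat_map (fun b => [And a b; Or a b; Imp a b; Coimp a b; Until a b; Since a b]) L) L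
  end.

Lemma flist_eq m : flist (S m) = map Var (seq 0 (S m)) ++ flist m ++
      flat_map (fun a => [Next a; Prev a; Glob a; Hist a]) (flist m) ++
      flat_map (fun a => flat_map (fun b => [And a b; Or a b; Imp a b; Coimp a b; Until a b; Since a b]) (flist m)) (flist m).
Proof. reflexivity. Qed.

Lemma flist_S n f : In f (flist n) -> In f (flist (S n)).
Proof. intro H. rewrite flist_eq. apply in_or_app. right. apply in_or_app. left. exact H. Qed.
Lemma flist_le m n f : m <= n -> In f (flist m) -> In f (flist n).
Proof. induction 1; auto. intro; apply flist_S; auto. Qed.

Lemma flist_bin m a b : In a (flist m) -> In b (flist m) ->
  forall g, In g [And a b; Or a b; Imp a b; Coimp a b; Until a b; Since a b] -> In g (flist (S m)).
Proof. intros Ha Hb g Hg. rewrite flist_eq. do 3 (apply in_or_app; right).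
  apply in_flat_map. exists a. split; auto. apply in_flat_map. exists b. split; auto. Qed.
Lemma flist_un m a : In a (flist m) ->
  forall g, In g [Next a; Prev a; Glob a; Hist a] -> In g (flist (S m)).
Proof. intros Ha g Hg. rewrite flist_eq. do 2 (apply in_or_app; right). apply in_or_app; left.
  apply in_flat_map. exists a. split; auto. Qed.

Lemma flist_all f : exists n, In f (flist n).
Proof.
  induction f.
  1: { exists (S n). rewrite flist_eq. apply in_or_app. left. apply in_map. apply in_seq. simpl. split; auto with arith. }
  all: try (destruct IHf as [m Hm]; exists (S m); apply (flist_un m f Hm); simpl; tauto).
  all: destruct IHf1 as [m1 H1]; destruct IHf2 as [m2 H2]; exists (S (max m1 m2));
    apply (flist_bin (max m1 m2) f1 f2);
    [ apply (flist_le m1); auto; apply Nat.le_max_l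
    | apply (flist_le m2); auto; apply Nat.le_max_r | simpl; tauto ].
Qed.

Definition step (p : (form -> Prop) * (form -> Prop)) (f : form) : (form -> Prop) * (form -> Prop) :=
  (fun g => fst p g \/ (g = f /\ ~ entails (add (fst p) f) (snd p)),
   fun g => snd p g \/ (g = f /\ entails (add (fst p) f) (snd p))).

Lemma step_ok p f : ~ entails (fst p) (snd p) -> ~ entails (fst (step p f)) (snd (step p f)).
Proof.
  intros H. destruct (classic (entails (add (fst p) f) (snd p))) as [E|E].
  - intro E2. apply H. apply (cut_ent _ _ f E).
    revert E2. apply entails_mono; simpl; unfold add.
    + intros g [h|[_ h]]; tauto.
    + intros g [h|[-> _]]; auto.
  - intro E2. apply E. revert E2. apply entails_mono; simpl; unfold add.
    + intros g [h|[-> _]]; auto.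
    + intros g [h|[_ h]]; tauto.
Qed.

Lemma step_mono p f : (forall g, fst p g -> fst (step p f) g) /\ (forall g, snd p g -> snd (step p f) g).
Proof. simpl; split; intros; auto. Qed.
Lemma step_dec p f : fst (step p f) f \/ snd (step p f) f.
Proof. simpl. destruct (classic (entails (add (fst p) f) (snd p))); auto. Qed.

Lemma fold_ok L : forall p, ~ entails (fst p) (snd p) ->
  ~ entails (fst (fold_left step L p)) (snd (fold_left step L p)).
Proof. induction L; simpl; intros; auto. apply IHL, step_ok; auto. Qed.
Lemma fold_mono L : forall p, (forall g, fst p g -> fst (fold_left step L p) g) /\
  (forall g, snd p g -> snd (fold_left step L p) g).
Proof. induction L; simpl; intros; auto. destruct (step_mono p a) as [h1 h2].
  destruct (IHL (step p a)) as [k1 k2]. split; auto. Qed.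
Lemma fold_dec L : forall p f, In f L -> fst (fold_left step L p) f \/ snd (fold_left step L p) f.
Proof. induction L; simpl; intros p f H. destruct H. destruct H as [<-|H]; auto.
  destruct (fold_mono L (step p a)) as [h1 h2]. destruct (step_dec p a); auto. Qed.

Section Lind.
Variables G0 D0 : form -> Prop.
Fixpoint stage (n : nat) : (form -> Prop) * (form -> Prop) :=
  match n with
  | 0 => (G0, D0)
  | S m => fold_left step (flist m) (stage m)
  end.

Hypothesis H0 : ~ entails G0 D0.
Lemma stage_ok n : ~ entails (fst (stage n)) (snd (stage n)).
Proof. induction n; simpl; auto. apply fold_ok; auto. Qed.
Lemma stage_mono m n : m <= n -> (forall g, fst (stage m) g -> fst (stage n) g) /\
  (forall g, snd (stage m) g -> snd (stage n) g).
Proof. induction 1. split; auto. destruct IHle. simpl. destruct (fold_mono (flist m0) (stage m0)).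
  split; auto. Qed.

Definition LPsi : form -> Prop := fun g => exists n, fst (stage n) g.
Definition LDel : form -> Prop := fun g => exists n, snd (stage n) g.

Lemma bound_list (F : nat -> form -> Prop) (Hm : forall m n g, m <= n -> F m g -> F n g) L :
  (forall g, In g L -> exists n, F n g) -> exists N, forall g, In g L -> F N g.
Proof. induction L; intros H. exists 0; intros _ [].
  destruct IHL as [N HN]. intros; apply H; simpl; auto.
  destruct (H a (or_introl eq_refl)) as [n Hn]. exists (max N n).
  intros g [<-|Hg]. apply (Hm n); auto. apply Nat.le_max_r. apply (Hm N); auto. apply Nat.le_max_l. Qed.

Lemma LPsi_ok : ~ entails LPsi LDel.
Proof.
  intros [G' [D' [h1 [h2 h3]]]].
  destruct (bound_list (fun n g => fst (stage n) g) (fun m n g H => proj1 (stage_mono m n H) g) G' h1) as [N1 HN1].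
  destruct (bound_list (fun n g => snd (stage n) g) (fun m n g H => proj2 (stage_mono m n H) g) D' h2) as [N2 HN2].
  apply (stage_ok (max N1 N2)). exists G', D'. repeat split; auto.
  intros g Hg. apply (proj1 (stage_mono N1 _ (Nat.le_max_l _ _))); auto.
  intros g Hg. apply (proj2 (stage_mono N2 _ (Nat.le_max_r _ _))); auto.
Qed.

Lemma LPsi_total g : LPsi g \/ LDel g.
Proof. destruct (flist_all g) as [m Hm]. destruct (fold_dec (flist m) (stage m) g Hm).
  left; exists (S m); auto. right; exists (S m); auto. Qed.

Lemma lindenbaum : exists Psi, tinf Psi /\ (forall f, G0 f -> Psi f) /\ (forall f, D0 f -> ~ Psi f).
Proof.
  exists LPsi. split; [|split].
  - apply cons_tinf. intro E. apply LPsi_ok. revert E. apply entails_mono; auto.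
    intros g Hg. destruct (LPsi_total g); tauto.
  - intros f Hf. exists 0; auto.
  - intros f Hf Hp. apply LPsi_ok. exists [f], [f]. repeat split.
    intros g [<-|[]]; auto. intros g [<-|[]]; exists 0; auto. simpl.
    eapply imp_trans. apply andl. apply orl.
Qed.
End Lind.

Section TT.
Variable P : form -> Prop.
Hypothesis HP : tinf P.
Lemma t1 a f : P a -> GTL (Imp a f) -> P f.
Proof. apply cl1, HP. Qed.
Lemma t2 a b f : P a -> P b -> GTL (Imp (And a b) f) -> P f.
Proof. apply cl2, HP. Qed.
Lemma t0 f : GTL f -> P f.
Proof. apply cl0, HP. Qed.
Lemma tprime a b : P (Or a b) -> P a \/ P b.
Proof. apply cl_prime, HP. Qed.
Lemma tnbot : ~ P Bot.
Proof. apply cl_nbot, HP. Qed.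
Lemma tcoimp a b : P a -> ~ P b -> P (Coimp a b).
Proof. apply cl_coimp, HP. Qed.
Lemma tAnd l : P (bigAnd l) <-> forall g, In g l -> P g.
Proof. apply cl_bigAnd, HP. Qed.
Lemma tOr l : P (bigOr l) <-> exists g, In g l /\ P g.
Proof. apply cl_bigOr, HP. Qed.
Lemma tand a b : P (And a b) <-> P a /\ P b.
Proof. split. intro h; split; [apply (t1 _ _ h (andl _ _))|apply (t1 _ _ h (andr _ _))].
  intros [h1 h2]; apply (t2 _ _ _ h1 h2 (imp_refl _)). Qed.
Lemma tmp a b : P a -> P (Imp a b) -> P b.
Proof. intros h1 h2; apply (t2 _ _ _ h1 h2 (imp_mp _ _)). Qed.
End TT.

Lemma bigOr_const D b : (forall x, In x D -> x = b) -> GTL (Imp (bigOr D) b).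
Proof. induction D; simpl; intros H. apply botE. apply orE. rewrite (H a); auto. apply imp_refl.
  apply IHD; auto. Qed.
Lemma bigAnd_const G a : (forall x, In x G -> x = a) -> GTL (Imp a (bigAnd G)).
Proof. induction G; simpl; intros H. apply weak, gtl_top. apply andI. rewrite (H a0); auto. apply imp_refl.
  apply IHG; auto. Qed.

Lemma imp_wit P a b : tinf P -> ~ P (Imp a b) -> exists Q, tinf Q /\ cle Q P /\ Q a /\ ~ Q b.
Proof.
  intros HP Hn.
  destruct (lindenbaum (add P a) (fun g => g = b)) as [Q [h1 [h2 h3]]].
  - intros [G' [D' [k1 [k2 k3]]]]. destruct (split_and P a G' k1) as [L1 [l1 l2]].
    apply Hn. apply (cl_main P (proj2 HP) L1); auto.
    apply mp2. eapply imp_trans. apply and_comm. eapply imp_trans. apply l2.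
    eapply imp_trans. apply k3. apply bigOr_const; auto.
  - exists Q. refine (conj h1 (conj _ (conj _ _))). intros f Hf; apply h2; left; auto. apply h2; right; auto. apply h3; auto.
Qed.

Lemma coimp_wit P a b : tinf P -> P (Coimp a b) -> exists Q, tinf Q /\ cle P Q /\ Q a /\ ~ Q b.
Proof.
  intros HP Hc.
  destruct (lindenbaum (fun g => g = a) (add (fun g => ~ P g) b)) as [Q [h1 [h2 h3]]].
  - intros [G' [D' [k1 [k2 k3]]]]. destruct (split_or _ b D' k2) as [M1 [m1 m2]].
    assert (Hm : P (bigOr M1)).
    { apply (t1 P HP _ _ Hc). apply g_coimp_res. eapply imp_trans. apply bigAnd_const; eauto.
      eapply imp_trans. apply k3. apply m2. }
    destruct (proj1 (tOr P HP M1) Hm) as [g [g1 g2]]. exact (m1 g g1 g2).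
  - exists Q. refine (conj h1 (conj _ (conj _ _))). 2: apply h2; auto.
    intros f Hf. apply NNPP; intro Hn. apply (h3 f); auto. left; auto.
    apply h3; right; auto.
Qed.

Lemma completeness a b : (forall Q, tinf Q -> Q a -> Q b) -> GTL (Imp a b).
Proof.
  intro H. apply NNPP; intro Hn.
  destruct (lindenbaum (fun g => g = a) (fun g => g = b)) as [Q [h1 [h2 h3]]].
  - intros [G' [D' [k1 [k2 k3]]]]. apply Hn. eapply imp_trans. apply bigAnd_const; eauto.
    eapply imp_trans. apply k3. apply bigOr_const; auto.
  - apply (h3 b eq_refl). apply H; auto.
Qed.

Definition comp (P Q : form -> Prop) : Prop := cle P Q \/ cle Q P.

Lemma sub_chain P Q R : tinf P -> tinf Q -> tinf R -> cle P Q -> cle P R -> cle Q R \/ cle R Q.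
Proof.
  intros HP HQ HR h1 h2. apply NNPP; intro Hn. apply not_or_and in Hn as [n1 n2].
  apply not_all_ex_not in n1 as [b n1]. apply not_all_ex_not in n2 as [a n2].
  apply imply_to_and in n1 as [Rb Qb]. apply imply_to_and in n2 as [Qa Ra].
  apply (tnbot P HP). apply (t2 P HP (Coimp a b) (Coimp b a)).
  apply h1. apply tcoimp; auto. apply h2. apply tcoimp; auto. apply g_coimp2.
Qed.

Lemma sup_chain P Q R : tinf P -> tinf Q -> tinf R -> cle Q P -> cle R P -> cle Q R \/ cle R Q.
Proof.
  intros HP HQ HR h1 h2. apply NNPP; intro Hn. apply not_or_and in Hn as [n1 n2].
  apply not_all_ex_not in n1 as [b n1]. apply not_all_ex_not in n2 as [a n2].
  apply imply_to_and in n1 as [Rb Qb]. apply imply_to_and in n2 as [Qa Ra].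
  assert (H : P (Or (Imp a b) (Imp b a))) by (apply t0; auto; apply g_lin).
  destruct (tprime P HP _ _ H) as [H1|H1].
  - apply Qb. apply (tmp Q HQ a); auto.
  - apply Ra. apply (tmp R HR b); auto.
Qed.

Lemma comp_trans P Q R : tinf P -> tinf Q -> tinf R -> comp P Q -> comp Q R -> comp P R.
Proof.
  unfold comp; intros HP HQ HR [h1|h1] [h2|h2].
  - left; intros f Hf; auto.
  - apply (sup_chain Q); auto.
  - apply (sub_chain Q); auto.
  - right; intros f Hf; auto.
Qed.
Lemma comp_sym P Q : comp P Q -> comp Q P.
Proof. unfold comp; tauto. Qed.
Lemma comp_refl P : comp P P.
Proof. left; intros f h; auto. Qed.

Section Succ.
Variables (N B : form -> form) (W : form -> form -> form).
Hypothesis HT : forall f, tax N B W f -> GTL f.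
Hypothesis HnN : forall a, GTL a -> GTL (N a).

Lemma N_bigAnd P : tinf P -> forall G, (forall g, In g G -> P (N g)) -> P (N (bigAnd G)).
Proof. intros HP G; induction G; simpl; intros H. apply t0; auto. apply HnN, gtl_top.
  apply (t2 P HP (N a) (N (bigAnd G))); auto. apply HT, tax_and. Qed.
Lemma N_bigOr P : tinf P -> forall D, P (N (bigOr D)) -> exists d, In d D /\ P (N d).
Proof. intros HP D; induction D; simpl; intros H.
  exfalso. apply (tnbot P HP). apply (t1 P HP _ _ H). apply HT, tax_nbot.
  destruct (tprime P HP (N a) (N (bigOr D))). apply (t1 P HP _ _ H). apply HT, tax_or.
  eauto. destruct IHD as [d [? ?]]; eauto. Qed.

Lemma N_tinf P : tinf P -> tinf (fun f => P (N f)).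
Proof.
  intros HP. apply cons_tinf. intros [G' [D' [k1 [k2 k3]]]].
  assert (H1 := N_bigAnd P HP G' k1).
  assert (H2 : P (N (bigOr D'))) by (apply (t1 P HP _ _ H1); apply (Nmono N B W HT HnN); auto).
  destruct (N_bigOr P HP D' H2) as [d [d1 d2]]. exact (k2 d d1 d2).
Qed.
End Succ.

Definition cpred (P : form -> Prop) : form -> Prop := fun f => P (Prev f).

Lemma csucc_tinf P : tinf P -> tinf (csucc P).
Proof. apply (N_tinf Next Glob Until g_fut g_necX). Qed.
Lemma cpred_tinf P : tinf P -> tinf (cpred P).
Proof. apply (N_tinf Prev Hist Since g_past g_necY). Qed.


Lemma pred_eq (P Q : form -> Prop) : (forall f, P f <-> Q f) -> P = Q.
Proof. intro H. extensionality f. apply propositional_extensionality. auto. Qed.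

Lemma csucc_cpred P : tinf P -> csucc (cpred P) = P.
Proof. intro HP. apply pred_eq. intro f. unfold csucc, cpred. split; intro H.
  apply (t1 P HP _ _ H). apply iff2, g_YX. apply (t1 P HP _ _ H). apply iff1, g_YX. Qed.
Lemma cpred_csucc P : tinf P -> cpred (csucc P) = P.
Proof. intro HP. apply pred_eq. intro f. unfold csucc, cpred. split; intro H.
  apply (t1 P HP _ _ H). apply iff2, g_XY. apply (t1 P HP _ _ H). apply iff1, g_XY. Qed.

(** * The quotient *)
Section Quot.
Variable Sg : form -> Prop.

Definition mem (X : qpt Sg) (P : form -> Prop) : Prop := proj1_sig X P.

Lemma Lset_comp P P' : tinf P -> tinf P' -> comp P P' -> Lseteq (Lset Sg P) (Lset Sg P').
Proof.
  intros HP HP' Hc A. split; intros [Q [HQ [Hq HA]]]; exists Q; split; auto; split; auto.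
  - apply (comp_trans Q P P'); auto.
  - apply (comp_trans Q P' P); auto. apply comp_sym; auto.
Qed.

Lemma csim_refl P : csim Sg P P.
Proof. split; intro; tauto. Qed.
Lemma csim_sym P Q : csim Sg P Q -> csim Sg Q P.
Proof. intros [h1 h2]; split; intro x; [rewrite (h1 x)|rewrite (h2 x)]; tauto. Qed.
Lemma csim_trans P Q R : csim Sg P Q -> csim Sg Q R -> csim Sg P R.
Proof. intros [h1 h2] [k1 k2]; split; intro x; [rewrite (h1 x), (k1 x)|rewrite (h2 x), (k2 x)]; tauto. Qed.

Lemma mem_some (X : qpt Sg) : exists P, mem X P.
Proof. destruct X as [C [P [HP HC]]]. exists P. unfold mem; simpl. apply HC. split; auto. apply csim_refl. Qed.
Lemma mem_tinf X P : mem X P -> tinf P.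
Proof. destruct X as [C [R [HR HC]]]. unfold mem; simpl. intro H. apply HC in H. apply H. Qed.
Lemma mem_csim X P Q : mem X P -> mem X Q -> csim Sg P Q.
Proof. destruct X as [C [R [HR HC]]]. unfold mem; simpl. intros H1 H2. apply HC in H1, H2.
  apply (csim_trans _ R). apply csim_sym, H1. apply H2. Qed.
Lemma mem_ext X P Q : mem X P -> tinf Q -> csim Sg P Q -> mem X Q.
Proof. destruct X as [C [R [HR HC]]]. unfold mem; simpl. intros H1 H2 H3. apply HC in H1.
  apply HC. split; auto. apply (csim_trans _ P); apply H1 || auto. Qed.
Lemma pt_ex P : tinf P -> exists X, mem X P.
Proof. intro HP. exists (exist _ (cls Sg P) (ex_intro _ P (conj HP (fun Q => iff_refl _)))).
  unfold mem; simpl. split; auto. apply csim_refl. Qed.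
Lemma qpt_eq X Y P : mem X P -> mem Y P -> X = Y.
Proof.
  intros H1 H2. destruct X as [C [R [HR HC]]]; destruct Y as [D [S [HS HD]]]. unfold mem in *; simpl in *.
  assert (C = D).
  { extensionality Q. apply propositional_extensionality. rewrite HC, HD.
    apply HC in H1; apply HD in H2. destruct H1 as [_ H1]; destruct H2 as [_ H2]. unfold cls.
    split; intros [h1 h2]; split; auto.
    - apply (csim_trans _ P). exact H2. apply (csim_trans _ R). apply csim_sym, H1. auto.
    - apply (csim_trans _ P). exact H1. apply (csim_trans _ S). apply csim_sym, H2. auto. }
  subst D. f_equal. apply proof_irrelevance.
Qed.

Lemma qlab_mem X P f : mem X P -> (qlab Sg X f <-> clab Sg P f).
Proof. intro H. unfold qlab, clab. split.
  - intros [h1 [Q [h2 h3]]]. destruct (mem_csim X Q P h2 H) as [k1 k2]. apply k1. split; auto.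
  - intros [h1 h2]. split; auto. exists P; auto. Qed.

Lemma qle_mem X Y P Q : mem X P -> mem Y Q ->
  (qle Sg X Y <-> Lseteq (Lset Sg P) (Lset Sg Q) /\ cle (clab Sg P) (clab Sg Q)).
Proof.
  intros HX HY. split.
  - intros [P' [Q' [h1 [h2 [h3 h4]]]]].
    destruct (mem_csim X P P' HX h1) as [a1 a2]. destruct (mem_csim Y Q Q' HY h2) as [b1 b2].
    split. intro A. rewrite (a2 A), (h3 A), <- (b2 A). tauto.
    intros f Hf. apply a1. apply h4. apply b1. auto.
  - intros [h1 h2]. exists P, Q. auto.
Qed.

Lemma cle_qle X Y P Q : mem X P -> mem Y Q -> cle P Q -> qle Sg X Y.
Proof.
  intros HX HY H. apply (qle_mem X Y P Q HX HY). split.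
  apply Lset_comp. apply (mem_tinf X); auto. apply (mem_tinf Y); auto. left; auto.
  intros f [h1 h2]; split; auto.
Qed.

Lemma K1 X Z P : qle Sg X Z -> mem Z P -> exists Q, mem X Q /\ cle Q P.
Proof.
  intros Hle HP. destruct (mem_some X) as [R HR].
  destruct (proj1 (qle_mem X Z R P HR HP) Hle) as [hL hc].
  assert (TR := mem_tinf X R HR). assert (TP := mem_tinf Z P HP).
  destruct (proj1 (hL (clab Sg R))) as [Q' [TQ' [hc' hs]]].
  { exists R. split; auto. split. left; intros f h; auto. intro; tauto. }
  destruct hc' as [hc'|hc'].
  - exists Q'. split; auto. apply (mem_ext X R); auto. split; auto.
    intro A. rewrite (hL A). apply Lset_comp; auto. apply comp_sym. left; auto.
  - exists P. split. apply (mem_ext X R); auto. split.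
    + intro f. split; intro h. apply hs in h. destruct h as [h1 h2]. split; auto.
      apply hc; auto.
    + intro A. rewrite (hL A); tauto.
    + intros f h; auto.
Qed.

Lemma K2 X Z P : qle Sg Z X -> mem Z P -> exists Q, mem X Q /\ cle P Q.
Proof.
  intros Hle HP. destruct (mem_some X) as [R HR].
  destruct (proj1 (qle_mem Z X P R HP HR) Hle) as [hL hc].
  assert (TR := mem_tinf X R HR). assert (TP := mem_tinf Z P HP).
  destruct (proj2 (hL (clab Sg R))) as [Q' [TQ' [hc' hs]]].
  { exists R. split; auto. split. left; intros f h; auto. intro; tauto. }
  destruct hc' as [hc'|hc'].
  - exists P. split. apply (mem_ext X R); auto. split.
    + intro f. split; intro h. apply hc; auto. apply hs. destruct h as [h1 h2]. split; auto.
    + intro A. rewrite (hL A); tauto.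
    + intros f h; auto.
  - exists Q'. split; auto. apply (mem_ext X R); auto. split; auto.
    intro A. rewrite <- (hL A). apply Lset_comp; auto. left; auto.
Qed.

End Quot.

Section Main.
Variable Sg : form -> Prop.
Hypothesis Hsub : subform_closed Sg.

Lemma qlab_eq X P : mem Sg X P -> qlab Sg X = clab Sg P.
Proof. intro H. apply pred_eq. intro f. apply qlab_mem; auto. Qed.

Lemma clab_type P : tinf P -> is_type Sg (clab Sg P).
Proof.
  intros [[_ [hA [hO [hI1 [hI2 [hC1 hC2]]]]]] _]. unfold clab.
  refine (conj _ (conj _ (conj _ (conj _ (conj _ (conj _ _)))))).
  - intros f [_ h]; auto.
  - intros a b H. pose proof (Hsub _ H) as [s1 s2]. rewrite (hA a b I). tauto.
  - intros a b H. pose proof (Hsub _ H) as [s1 s2]. rewrite (hO a b I). tauto.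
  - intros a b H [h1 _]. pose proof (Hsub _ H) as [s1 s2]. destruct (hI1 a b I h1); tauto.
  - intros a b H [h1 _]. split; auto. apply (hI2 a b I h1).
  - intros a b H [h1 _]. pose proof (Hsub _ H) as [s1 s2]. split; auto. apply (hC1 a b I h1).
  - intros a b H [h1 _] h2. pose proof (Hsub _ H) as [s1 s2]. split; auto. apply hC2; [exact I|auto|].
    intro hb; apply h2; split; auto.
Qed.

Lemma sameL_comparable X Y P Q : mem Sg X P -> mem Sg Y Q -> Lseteq (Lset Sg P) (Lset Sg Q) ->
  qle Sg X Y \/ qle Sg Y X.
Proof.
  intros HX HY hL. assert (TP := mem_tinf _ _ _ HX). assert (TQ := mem_tinf _ _ _ HY).
  destruct (proj2 (hL (clab Sg Q))) as [Q' [TQ' [hc hs]]].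
  { exists Q. split; auto. split. left; intros f h; auto. intro; tauto. }
  destruct hc as [hc|hc].
  - right. apply (qle_mem Sg Y X Q P HY HX). split. intro A; rewrite (hL A); tauto.
    intros f h. apply hs. destruct h; split; auto.
  - left. apply (qle_mem Sg X Y P Q HX HY). split. auto.
    intros f h. apply hs in h. destruct h; split; auto.
Qed.

Lemma qle_L X Y P Q : mem Sg X P -> mem Sg Y Q -> qle Sg X Y -> Lseteq (Lset Sg P) (Lset Sg Q).
Proof. intros HX HY H. apply (qle_mem Sg X Y P Q HX HY) in H. apply H. Qed.

Lemma qle_refl X : qle Sg X X.
Proof. destruct (mem_some _ X) as [P HP]. apply (qle_mem Sg X X P P HP HP). split.
  intro; tauto. intros f h; auto. Qed.

Lemma qle_trans X Y Z : qle Sg X Y -> qle Sg Y Z -> qle Sg X Z.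
Proof.
  destruct (mem_some _ X) as [P HP]; destruct (mem_some _ Y) as [Q HQ]; destruct (mem_some _ Z) as [R HR].
  rewrite (qle_mem Sg X Y P Q HP HQ), (qle_mem Sg Y Z Q R HQ HR), (qle_mem Sg X Z P R HP HR).
  intros [h1 h2] [k1 k2]. split. intro A; rewrite (h1 A); auto. intros f h; auto.
Qed.

Lemma disj_lin : disj_union_linear (qle Sg).
Proof.
  split; [|split; [|split]].
  - apply qle_refl.
  - intros X Y h1 h2. destruct (mem_some _ X) as [P HP]; destruct (mem_some _ Y) as [Q HQ].
    apply (qle_mem Sg X Y P Q HP HQ) in h1. apply (qle_mem Sg Y X Q P HQ HP) in h2.
    apply (qpt_eq Sg X Y P HP). apply (mem_ext Sg Y Q); auto. apply (mem_tinf _ _ _ HP).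
    split. intro f; split; intro h; [apply (proj2 h1)| apply (proj2 h2)]; auto. apply h2.
  - apply qle_trans.
  - intros X Y Z h1 h2. destruct (mem_some _ X) as [P HP]; destruct (mem_some _ Y) as [Q HQ];
    destruct (mem_some _ Z) as [R HR].
    assert (L1 : Lseteq (Lset Sg P) (Lset Sg Q)).
    { destruct h1 as [h1|h1]. apply (qle_L X Y); auto. intro A. rewrite (qle_L Y X Q P HQ HP h1 A); tauto. }
    assert (L2 : Lseteq (Lset Sg Q) (Lset Sg R)).
    { destruct h2 as [h2|h2]. apply (qle_L Y Z); auto. intro A. rewrite (qle_L Z Y R Q HR HQ h2 A); tauto. }
    apply (sameL_comparable X Z P R HP HR). intro A. rewrite (L1 A); auto.
Qed.

Lemma lab_space : labelled_space Sg (qle Sg) (qlab Sg).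
Proof.
  split; [apply disj_lin|split; [|split; [|split]]].
  - intro w. destruct (mem_some _ w) as [P HP]. rewrite (qlab_eq w P HP). apply clab_type.
    apply (mem_tinf _ _ _ HP).
  - intros w v H f Hf. destruct (mem_some _ w) as [P HP]; destruct (mem_some _ v) as [Q HQ].
    apply (qle_mem Sg w v P Q HP HQ) in H. rewrite (qlab_eq w P HP). rewrite (qlab_eq v Q HQ) in Hf.
    apply H; auto.
  - intros w a b HS Hn. destruct (mem_some _ w) as [P HP]. rewrite (qlab_eq w P HP) in Hn.
    assert (TP := mem_tinf _ _ _ HP).
    destruct (imp_wit P a b TP) as [Q [TQ [hc [ha hb]]]].
    { intro h. apply Hn. split; auto. }
    destruct (pt_ex Sg Q TQ) as [v Hv]. exists v. rewrite (qlab_eq v Q Hv).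
    pose proof (Hsub _ HS) as [s1 s2]. split.
    apply (cle_qle Sg v w Q P Hv HP hc). split. split; auto. intros [h _]; auto.
  - intros w a b H. destruct (mem_some _ w) as [P HP]. rewrite (qlab_eq w P HP) in H.
    assert (TP := mem_tinf _ _ _ HP). destruct H as [H HS].
    destruct (coimp_wit P a b TP H) as [Q [TQ [hc [ha hb]]]].
    destruct (pt_ex Sg Q TQ) as [v Hv]. exists v. rewrite (qlab_eq v Q Hv).
    pose proof (Hsub _ HS) as [s1 s2]. split.
    apply (cle_qle Sg w v P Q HP Hv hc). split. split; auto. intros [h _]; auto.
Qed.

Lemma lab_of X P f : mem Sg X P -> qlab Sg X f -> P f.
Proof. intros H h. apply (qlab_mem Sg X P f H) in h. apply h. Qed.
Lemma lab_to X P f : mem Sg X P -> P f -> Sg f -> qlab Sg X f.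
Proof. intros H h s. apply (qlab_mem Sg X P f H). split; auto. Qed.
Lemma lab_Sg X f : qlab Sg X f -> Sg f.
Proof. intros [h _]; auto. Qed.
Lemma lab_le X Y f : qle Sg X Y -> qlab Sg Y f -> qlab Sg X f.
Proof. intros H h. destruct (mem_some _ X) as [P HP]; destruct (mem_some _ Y) as [Q HQ].
  apply (qle_mem Sg X Y P Q HP HQ) in H. apply (qlab_mem Sg Y Q f HQ) in h.
  apply (qlab_mem Sg X P f HP). apply H; auto. Qed.

Lemma R0_Rplus X Y : R0 Sg X Y -> Rplus Sg X Y.
Proof. intro H. exists X, X, Y, Y. repeat split; auto using qle_refl. Qed.

Lemma convex : convex_rel (qle Sg) (Rplus Sg).
Proof.
  split.
  - intros w v1 u v2 [X1a [X2a [Y1a [Y2a [a1 [a2 [a3 [a4 [a5 a6]]]]]]]]]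
      [X1b [X2b [Y1b [Y2b [b1 [b2 [b3 [b4 [b5 b6]]]]]]]]] h1 h2.
    exists X1b, X2a, Y1a, Y2b. repeat split; auto.
    apply (qle_trans _ v1); auto. apply (qle_trans _ v2); auto.
  - intros v w1 u w2 [X1a [X2a [Y1a [Y2a [a1 [a2 [a3 [a4 [a5 a6]]]]]]]]]
      [X1b [X2b [Y1b [Y2b [b1 [b2 [b3 [b4 [b5 b6]]]]]]]]] h1 h2.
    exists X1a, X2b, Y1b, Y2a. repeat split; auto.
    apply (qle_trans _ w1); auto. apply (qle_trans _ w2); auto.
Qed.

Lemma csucc_mono P Q : cle P Q -> cle (csucc P) (csucc Q).
Proof. intros H f h. apply H, h. Qed.
Lemma cpred_mono P Q : cle P Q -> cle (cpred P) (cpred Q).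
Proof. intros H f h. apply H, h. Qed.

Lemma confluent : fully_confluent (qle Sg) (Rplus Sg).
Proof.
  split; [|split; [|split]].
  - intros x x' y' hx [X1 [X2 [Y1 [Y2 [a1 [a2 [a3 [a4 [[P2 [p1 p2]] a6]]]]]]]]].
    destruct (K1 Sg x X2 P2 (qle_trans _ _ _ hx a2) p1) as [Q [q1 q2]].
    assert (TQ := mem_tinf _ _ _ q1).
    destruct (pt_ex Sg (csucc Q) (csucc_tinf Q TQ)) as [y hy]. exists y. split.
    apply R0_Rplus. exists Q; auto.
    apply (qle_trans _ Y1); auto. apply (cle_qle Sg y Y1 (csucc Q) (csucc P2)); auto. apply csucc_mono; auto.
  - intros x x' y hx [X1 [X2 [Y1 [Y2 [a1 [a2 [a3 [a4 [a5 [P1 [p1 p2]]]]]]]]]]].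
    destruct (K2 Sg x' X1 P1 (qle_trans _ _ _ a1 hx) p1) as [Q [q1 q2]].
    assert (TQ := mem_tinf _ _ _ q1).
    destruct (pt_ex Sg (csucc Q) (csucc_tinf Q TQ)) as [y' hy]. exists y'. split.
    apply R0_Rplus. exists Q; auto.
    apply (qle_trans _ Y2); auto. apply (cle_qle Sg Y2 y' (csucc P1) (csucc Q)); auto. apply csucc_mono; auto.
  - intros x' y' y [X1 [X2 [Y1 [Y2 [a1 [a2 [a3 [a4 [a5 [P1 [p1 p2]]]]]]]]]]] hy.
    destruct (K1 Sg y Y2 (csucc P1) (qle_trans _ _ _ hy a4) p2) as [Q' [q1 q2]].
    assert (TQ' := mem_tinf _ _ _ q1). assert (TP1 := mem_tinf _ _ _ p1).
    destruct (pt_ex Sg (cpred Q') (cpred_tinf Q' TQ')) as [x hx]. exists x. split.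
    + apply (qle_trans _ X1); auto. apply (cle_qle Sg x X1 (cpred Q') P1); auto.
      intros f hf. apply q2. apply (t1 _ TP1 _ _ hf). apply iff1, g_XY.
    + apply R0_Rplus. exists (cpred Q'). split; auto. rewrite csucc_cpred; auto.
  - intros x y y' [X1 [X2 [Y1 [Y2 [a1 [a2 [a3 [a4 [[P2 [p1 p2]] a6]]]]]]]]] hy.
    destruct (K2 Sg y' Y1 (csucc P2) (qle_trans _ _ _ a3 hy) p2) as [Q' [q1 q2]].
    assert (TQ' := mem_tinf _ _ _ q1). assert (TP2 := mem_tinf _ _ _ p1).
    destruct (pt_ex Sg (cpred Q') (cpred_tinf Q' TQ')) as [x' hx]. exists x'. split.
    + apply (qle_trans _ X2); auto. apply (cle_qle Sg X2 x' P2 (cpred Q')); auto.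
      intros f hf. apply (t1 _ TP2 _ _ (q2 _ hf)). apply iff2, g_XY.
    + apply R0_Rplus. exists (cpred Q'). split; auto. rewrite csucc_cpred; auto.
Qed.

Lemma biserial : bi_serial (Rplus Sg).
Proof.
  intro w. destruct (mem_some _ w) as [P HP]. assert (TP := mem_tinf _ _ _ HP). split.
  - destruct (pt_ex Sg (csucc P) (csucc_tinf P TP)) as [v hv]. exists v. apply R0_Rplus. exists P; auto.
  - destruct (pt_ex Sg (cpred P) (cpred_tinf P TP)) as [u hu]. exists u. apply R0_Rplus.
    exists (cpred P). split; auto. rewrite csucc_cpred; auto.
Qed.

Lemma XH_H a : GTL (Imp (Next (Hist a)) (Hist a)).
Proof. eapply imp_trans. apply (Nmono Next Glob Until g_fut g_necX). apply (B_step Prev Hist Since g_past).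
  apply iff2, g_XY. Qed.

Lemma sensible_R : sensible Sg (qlab Sg) (Rplus Sg).
Proof.
  intros w v [X1 [X2 [Y1 [Y2 [a1 [a2 [a3 [a4 [[P2 [p21 p22]] [P1 [p11 p12]]]]]]]]]]].
  assert (T1 := mem_tinf _ _ _ p11). assert (T2 := mem_tinf _ _ _ p21).
  assert (T1' := mem_tinf _ _ _ p12). assert (T2' := mem_tinf _ _ _ p22).
  split; [|split; [|split; [|split; [|split]]]].
  - intros a HS. pose proof (Hsub _ HS) as s. split; intro h.
    + apply (lab_le v Y2); auto. apply (lab_to _ _ _ p12); auto.
      apply (lab_of X1 P1); auto. apply (lab_le X1 w); auto.
    + apply (lab_le w X2); auto. apply (lab_to _ _ _ p21); auto.
      apply (lab_of Y1 (csucc P2)); auto. apply (lab_le Y1 v); auto.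
  - intros a HS. pose proof (Hsub _ HS) as s. split; intro h.
    + apply (lab_le w X2); auto. apply (lab_to _ _ _ p21); auto.
      apply (t1 _ T2 _ _ (lab_of Y1 (csucc P2) _ p22 (lab_le Y1 v _ a3 h))). apply iff2, g_XY.
    + apply (lab_le v Y2); auto. apply (lab_to _ _ _ p12); auto. unfold csucc.
      apply (t1 _ T1 _ _ (lab_of X1 P1 _ p11 (lab_le X1 w _ a1 h))). apply iff1, g_XY.
  - intros a HS. pose proof (Hsub _ HS) as s. split; intro h.
    + destruct (mem_some _ w) as [P HP]. assert (TP := mem_tinf _ _ _ HP). split.
      apply (lab_to _ _ _ HP); auto. apply (t1 _ TP _ _ (lab_of _ _ _ HP h)). apply (B_elim Next Glob Until g_fut).
      apply (lab_le v Y2); auto. apply (lab_to _ _ _ p12); auto. unfold csucc.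
      apply (t1 _ T1 _ _ (lab_of X1 P1 _ p11 (lab_le X1 w _ a1 h))). apply (B_step Next Glob Until g_fut).
    + destruct h as [h1 h2].
      destruct (K1 Sg w X2 P2 a2 p21) as [Q [q1 q2]]. assert (TQ := mem_tinf _ _ _ q1).
      apply (lab_to _ _ _ q1); auto. apply (t2 Q TQ a (Next (Glob a))).
      apply (lab_of _ _ _ q1 h1). apply q2. apply (lab_of _ _ _ p22 (lab_le Y1 v _ a3 h2)).
      apply (B_fold Next Glob Until g_fut g_necX g_necG).
  - intros a HS. pose proof (Hsub _ HS) as s. split; intro h.
    + destruct (mem_some _ v) as [P HP]. assert (TP := mem_tinf _ _ _ HP). split.
      apply (lab_to _ _ _ HP); auto. apply (t1 _ TP _ _ (lab_of _ _ _ HP h)). apply (B_elim Prev Hist Since g_past).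
      apply (lab_le w X2); auto. apply (lab_to _ _ _ p21); auto.
      apply (t1 _ T2 _ _ (lab_of Y1 (csucc P2) _ p22 (lab_le Y1 v _ a3 h))). apply XH_H.
    + destruct h as [h1 h2].
      destruct (K1 Sg v Y2 (csucc P1) a4 p12) as [Q [q1 q2]]. assert (TQ := mem_tinf _ _ _ q1).
      apply (lab_to _ _ _ q1); auto. apply (t2 Q TQ a (Prev (Hist a))).
      apply (lab_of _ _ _ q1 h1). apply q2. unfold csucc.
      apply (t1 _ T1 _ _ (lab_of X1 P1 _ p11 (lab_le X1 w _ a1 h2))). apply iff1, g_XY.
      apply (B_fold Prev Hist Since g_past g_necY g_necH).
  - intros a b HS. pose proof (Hsub _ HS) as [sa sb]. split; intro h.
    + destruct (classic (qlab Sg w b)) as [hb|hb]; [left; auto|right].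
      destruct (K2 Sg w X1 P1 a1 p11) as [Q [q1 q2]]. assert (TQ := mem_tinf _ _ _ q1).
      assert (hu : Q (Or b (And a (Next (Until a b))))).
      { apply (t1 _ TQ _ _ (lab_of _ _ _ q1 h)). apply (W_unfold Next Glob Until g_fut g_necX g_necG). }
      destruct (tprime _ TQ _ _ hu) as [hq|hq]. exfalso; apply hb; apply (lab_to _ _ _ q1); auto.
      apply (tand _ TQ) in hq as [hq1 hq2]. split. apply (lab_to _ _ _ q1); auto.
      apply (lab_le v Y2); auto. apply (lab_to _ _ _ p12); auto. apply q2; auto.
    + destruct h as [h|[h1 h2]].
      * destruct (mem_some _ w) as [P HP]. assert (TP := mem_tinf _ _ _ HP).
        apply (lab_to _ _ _ HP); auto. apply (t1 _ TP _ _ (lab_of _ _ _ HP h)).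
        apply (W_b Next Glob Until g_fut).
      * destruct (K1 Sg w X2 P2 a2 p21) as [Q [q1 q2]]. assert (TQ := mem_tinf _ _ _ q1).
        apply (lab_to _ _ _ q1); auto. apply (t2 Q TQ a (Next (Until a b))).
        apply (lab_of _ _ _ q1 h1). apply q2. apply (lab_of _ _ _ p22 (lab_le Y1 v _ a3 h2)).
        apply (W_a Next Glob Until g_fut).
  - intros a b HS. pose proof (Hsub _ HS) as [sa sb]. split; intro h.
    + destruct (classic (qlab Sg v b)) as [hb|hb]; [left; auto|right].
      destruct (K2 Sg v Y1 (csucc P2) a3 p22) as [Q [q1 q2]]. assert (TQ := mem_tinf _ _ _ q1).
      assert (hu : Q (Or b (And a (Prev (Since a b))))).
      { apply (t1 _ TQ _ _ (lab_of _ _ _ q1 h)). apply (W_unfold Prev Hist Since g_past g_necY g_necH). }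
      destruct (tprime _ TQ _ _ hu) as [hq|hq]. exfalso; apply hb; apply (lab_to _ _ _ q1); auto.
      apply (tand _ TQ) in hq as [hq1 hq2]. split. apply (lab_to _ _ _ q1); auto.
      apply (lab_le w X2); auto. apply (lab_to _ _ _ p21); auto.
      apply (t1 _ T2 _ _ (q2 _ hq2)). apply iff2, g_XY.
    + destruct h as [h|[h1 h2]].
      * destruct (mem_some _ v) as [P HP]. assert (TP := mem_tinf _ _ _ HP).
        apply (lab_to _ _ _ HP); auto. apply (t1 _ TP _ _ (lab_of _ _ _ HP h)).
        apply (W_b Prev Hist Since g_past).
      * destruct (K1 Sg v Y2 (csucc P1) a4 p12) as [Q [q1 q2]]. assert (TQ := mem_tinf _ _ _ q1).
        apply (lab_to _ _ _ q1); auto. apply (t2 Q TQ a (Prev (Since a b))).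
        apply (lab_of _ _ _ q1 h1). apply q2. unfold csucc.
        apply (t1 _ T1 _ _ (lab_of X1 P1 _ p11 (lab_le X1 w _ a1 h2))). apply iff1, g_XY.
        apply (W_a Prev Hist Since g_past).
Qed.

(** * omega-sensibility *)
Fixpoint splits (t : list form) : list (list form * list form) :=
  match t with
  | [] => [([], [])]
  | x :: t' => map (fun p => (x :: fst p, snd p)) (splits t') ++ map (fun p => (fst p, x :: snd p)) (splits t')
  end.

Lemma splits_cover t T C : In (T, C) (splits t) -> forall f, In f t -> In f T \/ In f C.
Proof.
  revert T C; induction t as [|x t IH]; simpl; intros T C H f Hf. destruct Hf.
  apply in_app_or in H. destruct H as [H|H]; apply in_map_iff in H as [[T' C'] [E H]];
  simpl in E; injection E; intros; subst; destruct Hf as [<-|Hf]; simpl; auto;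
  destruct (IH _ _ H f Hf); simpl; auto.
Qed.

Lemma splits_ex (Q : form -> Prop) t : exists T C, In (T, C) (splits t) /\
  (forall f, In f T -> Q f) /\ (forall f, In f C -> ~ Q f).
Proof.
  induction t as [|x t IH]. exists [], []. simpl. repeat split; auto; intros f [].
  destruct IH as [T [C [h1 [h2 h3]]]]. destruct (classic (Q x)).
  - exists (x :: T), C. split. simpl. apply in_or_app. left. apply in_map_iff. exists (T, C); auto.
    split; auto. intros f [<-|hf]; auto.
  - exists T, (x :: C). split. simpl. apply in_or_app. right. apply in_map_iff. exists (T, C); auto.
    split; auto. intros f [<-|hf]; auto.
Qed.

Lemma same_split t T C R R' : In (T, C) (splits t) -> tinf R -> tinf R' ->
  R (bigAnd T) -> ~ R (bigOr C) -> R' (bigAnd T) -> ~ R' (bigOr C) ->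
  forall f, In f t -> (R f <-> R' f).
Proof.
  intros H TR TR' h1 h2 h3 h4 f Hf. destruct (splits_cover t T C H f Hf) as [hT|hC].
  - split; intros _. apply (tAnd R' TR' T); auto. apply (tAnd R TR T); auto.
  - split; intro h; exfalso. apply h2, (tOr R TR). eauto. apply h4, (tOr R' TR'). eauto.
Qed.

Lemma prof_of t R : tinf R -> exists T C, In (T, C) (splits t) /\ R (bigAnd T) /\ ~ R (bigOr C).
Proof.
  intro TR. destruct (splits_ex R t) as [T [C [h1 [h2 h3]]]]. exists T, C. split; auto. split.
  apply (tAnd R TR); auto. intro h. apply (tOr R TR) in h as [g [g1 g2]]. exact (h3 g g1 g2).
Qed.

Lemma list_filter_ex {A} (p : A -> Prop) (L : list A) : exists L', forall x, In x L' <-> In x L /\ p x.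
Proof.
  induction L as [|a L IH]. exists []. simpl; tauto.
  destruct IH as [L' H]. destruct (classic (p a)).
  - exists (a :: L'). intro x. simpl. rewrite H. split. intros [<-|[h1 h2]]; auto. intros [[<-|h1] h2]; auto.
  - exists L'. intro x. simpl. rewrite H. split. intros [h1 h2]; auto. intros [[<-|h1] h2]; tauto.
Qed.

Lemma iter_snoc {T} (R : T -> T -> Prop) n x y z : iter_rel R n x y -> R y z -> iter_rel R (S n) x z.
Proof. revert x; induction n; simpl; intros x H1 H2. subst; exists z; auto.
  destruct H1 as [u [h1 h2]]. exists u; split; auto. apply (IHn u h2 H2). Qed.

Section Omega.
Variable l : list form.
Hypothesis Hl : forall f, Sg f <-> In f l.

Definition Lsig : list form :=
  flat_map (fun p => [Coimp (bigAnd (fst p)) (bigOr (snd p)); Imp (bigAnd (fst p)) (bigOr (snd p))]) (splits l).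
Definition l' := l ++ Lsig.

Lemma Lset_transfer Th Th' A : tinf Th -> tinf Th' -> (forall f, In f l' -> (Th f <-> Th' f)) ->
  Lset Sg Th A -> Lset Sg Th' A.
Proof.
  intros T T' Hs [R [TR [hc hs]]].
  destruct (prof_of l R TR) as [s [r [k1 [k2 k3]]]].
  assert (Hin : forall g, In g [Coimp (bigAnd s) (bigOr r); Imp (bigAnd s) (bigOr r)] -> In g l').
  { intros g Hg. unfold l'. apply in_or_app. right. unfold Lsig. apply in_flat_map. exists (s, r). auto. }
  assert (Hfin : forall R', tinf R' -> R' (bigAnd s) -> ~ R' (bigOr r) -> seteq A (clab Sg R')).
  { intros R' TR' j1 j2 f. rewrite (hs f). unfold clab. split; intros [h1 h2]; split; auto;
    rewrite Hl in h2; [rewrite <- (same_split l s r R R')|rewrite (same_split l s r R R')]; auto. }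
  destruct hc as [hc|hc].
  - assert (HI : ~ Th' (Imp (bigAnd s) (bigOr r))).
    { rewrite <- Hs by (apply Hin; simpl; auto). intro h. apply k3. apply (tmp R TR (bigAnd s)); auto. }
    destruct (imp_wit Th' _ _ T' HI) as [R' [TR' [j1 [j2 j3]]]].
    exists R'. refine (conj TR' (conj _ _)). left; exact j1. apply Hfin; auto.
  - assert (HC : Th' (Coimp (bigAnd s) (bigOr r))).
    { rewrite <- Hs by (apply Hin; simpl; auto). apply hc. apply tcoimp; auto. }
    destruct (coimp_wit Th' _ _ T' HC) as [R' [TR' [j1 [j2 j3]]]].
    exists R'. refine (conj TR' (conj _ _)). right; exact j1. apply Hfin; auto.
Qed.

Lemma prof_csim Th Th' : tinf Th -> tinf Th' -> (forall f, In f l' -> (Th f <-> Th' f)) -> csim Sg Th Th'.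
Proof.
  intros T T' Hs. split.
  - intro f. unfold clab. split; intros [h1 h2]; split; auto; [rewrite <- Hs|rewrite Hs]; auto;
    unfold l'; apply in_or_app; left; apply Hl; auto.
  - intro A. split; apply Lset_transfer; auto. intros f hf; symmetry; auto.
Qed.

Section Forms.
Variable DP : (form -> Prop) -> Prop.
Hypothesis DPinv : forall Th Th', DP Th -> tinf Th' -> csim Sg Th Th' -> DP Th'.

Lemma omega_forms : exists psi th,
  (forall Ps, tinf Ps -> Ps psi -> exists Th, tinf Th /\ cle Ps Th /\ DP Th) /\
  (forall Th, tinf Th -> DP Th -> Th psi) /\
  (forall Ps, tinf Ps -> ~ Ps th -> exists Th, tinf Th /\ cle Th Ps /\ DP Th) /\
  (forall Th, tinf Th -> DP Th -> ~ Th th).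
Proof.
  destruct (list_filter_ex (fun p => exists Th, tinf Th /\ DP Th /\ Th (bigAnd (fst p)) /\ ~ Th (bigOr (snd p)))
    (splits l')) as [Ts HTs].
  exists (bigOr (map (fun p => Coimp (bigAnd (fst p)) (bigOr (snd p))) Ts)).
  exists (bigAnd (map (fun p => Imp (bigAnd (fst p)) (bigOr (snd p))) Ts)).
  split; [|split; [|split]].
  - intros Ps TPs H. apply (tOr Ps TPs) in H as [g [g1 g2]]. apply in_map_iff in g1 as [[T C] [E g1]].
    simpl in E; subst g. apply HTs in g1 as [g1 [Th [TTh [D [d1 d2]]]]]. simpl in d1, d2.
    destruct (coimp_wit Ps _ _ TPs g2) as [Th' [TTh' [j1 [j2 j3]]]].
    exists Th'. split; auto. split; auto. apply (DPinv Th); auto. apply prof_csim; auto.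
    apply (same_split l' T C); auto.
  - intros Th TTh D. destruct (prof_of l' Th TTh) as [T [C [k1 [k2 k3]]]].
    apply (tOr Th TTh). exists (Coimp (bigAnd T) (bigOr C)). split.
    apply in_map_iff. exists (T, C). split; auto. apply HTs. split; auto. exists Th; auto.
    apply tcoimp; auto.
  - intros Ps TPs H. assert (exists g, In g (map (fun p => Imp (bigAnd (fst p)) (bigOr (snd p))) Ts) /\ ~ Ps g) as [g [g1 g2]].
    { apply NNPP; intro Hn. apply H. apply (tAnd Ps TPs). intros g hg. apply NNPP; intro hn. apply Hn; eauto. }
    apply in_map_iff in g1 as [[T C] [E g1]]. simpl in E; subst g.
    apply HTs in g1 as [g1 [Th [TTh [D [d1 d2]]]]]. simpl in d1, d2.
    destruct (imp_wit Ps _ _ TPs g2) as [Th' [TTh' [j1 [j2 j3]]]].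
    exists Th'. split; auto. split; auto. apply (DPinv Th); auto. apply prof_csim; auto.
    apply (same_split l' T C); auto.
  - intros Th TTh D H. destruct (prof_of l' Th TTh) as [T [C [k1 [k2 k3]]]].
    apply k3. apply (tmp Th TTh (bigAnd T)); auto. apply (proj1 (tAnd Th TTh _) H).
    apply in_map_iff. exists (T, C). split; auto. apply HTs. split; auto. exists Th; auto.
Qed.
End Forms.

Lemma DP_inv (D : qpt Sg -> Prop) : forall Th Th', (exists X, D X /\ mem Sg X Th) -> tinf Th' -> csim Sg Th Th' ->
  (exists X, D X /\ mem Sg X Th').
Proof. intros Th Th' [X [h1 h2]] T' hc. exists X. split; auto. apply (mem_ext Sg X Th); auto. Qed.

Lemma omega : omega_sensible Sg (qlab Sg) (Rplus Sg).
Proof.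
  split; [|split; [|split]].
  - intros w a HS Hn. apply NNPP; intro Hno.
    assert (Hall : forall n v, iter_rel (Rplus Sg) n w v -> qlab Sg v a).
    { intros n v h. apply NNPP; intro h'. apply Hno; eauto. }
    set (D := fun X => exists n, iter_rel (Rplus Sg) n w X).
    destruct (omega_forms (fun Th => exists X, D X /\ mem Sg X Th) (DP_inv D)) as [psi [th [i1 [i2 _]]]].
    assert (Ha : GTL (Imp psi a)).
    { apply completeness. intros Ps TPs h. destruct (i1 Ps TPs h) as [Th [TTh [hc [X [[n hn] hX]]]]].
      apply hc. apply (lab_of X); auto. eapply Hall; eauto. }
    assert (HX : GTL (Imp psi (Next psi))).
    { apply completeness. intros Ps TPs h. destruct (i1 Ps TPs h) as [Th [TTh [hc [X [[n hn] hX]]]]].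
      destruct (pt_ex Sg (csucc Th) (csucc_tinf Th TTh)) as [Y hY].
      apply (csucc_mono _ _ hc). apply (i2 (csucc Th) (csucc_tinf Th TTh)). exists Y. split; auto.
      exists (S n). apply (iter_snoc _ n w X Y); auto. apply R0_Rplus. exists Th; auto. }
    destruct (mem_some _ w) as [P HP]. assert (TP := mem_tinf _ _ _ HP).
    apply Hn. apply (lab_to _ _ _ HP); auto. apply (t1 P TP psi).
    apply i2; auto. exists w. split; auto. exists 0; simpl; auto.
    apply (B_ind Next Glob Until g_fut g_necG); auto.
  - intros w a HS Hn. apply NNPP; intro Hno.
    assert (Hall : forall n v, iter_rel (Rplus Sg) n v w -> qlab Sg v a).
    { intros n v h. apply NNPP; intro h'. apply Hno; eauto. }
    set (D := fun X => exists n, iter_rel (Rplus Sg) n X w).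
    destruct (omega_forms (fun Th => exists X, D X /\ mem Sg X Th) (DP_inv D)) as [psi [th [i1 [i2 _]]]].
    assert (Ha : GTL (Imp psi a)).
    { apply completeness. intros Ps TPs h. destruct (i1 Ps TPs h) as [Th [TTh [hc [X [[n hn] hX]]]]].
      apply hc. apply (lab_of X); auto. eapply Hall; eauto. }
    assert (HX : GTL (Imp psi (Prev psi))).
    { apply completeness. intros Ps TPs h. destruct (i1 Ps TPs h) as [Th [TTh [hc [X [[n hn] hX]]]]].
      destruct (pt_ex Sg (cpred Th) (cpred_tinf Th TTh)) as [Y hY].
      apply (cpred_mono _ _ hc). apply (i2 (cpred Th) (cpred_tinf Th TTh)). exists Y. split; auto.
      exists (S n). exists X. split; auto. apply R0_Rplus. exists (cpred Th). split; auto.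
      rewrite csucc_cpred; auto. }
    destruct (mem_some _ w) as [P HP]. assert (TP := mem_tinf _ _ _ HP).
    apply Hn. apply (lab_to _ _ _ HP); auto. apply (t1 P TP psi).
    apply i2; auto. exists w. split; auto. exists 0; simpl; auto.
    apply (B_ind Prev Hist Since g_past g_necH); auto.
  - intros w a b Hu. apply NNPP; intro Hno.
    assert (HS := lab_Sg _ _ Hu). pose proof (Hsub _ HS) as [sa sb].
    assert (Hall : forall n v, iter_rel (Rplus Sg) n w v -> ~ qlab Sg v b).
    { intros n v h h'. apply Hno; eauto. }
    set (D := fun X => exists n, iter_rel (Rplus Sg) n w X).
    destruct (omega_forms (fun Th => exists X, D X /\ mem Sg X Th) (DP_inv D)) as [psi [th [_ [_ [i3 i4]]]]].
    assert (Hb : GTL (Imp b th)).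
    { apply completeness. intros Ps TPs h. apply NNPP; intro hn.
      destruct (i3 Ps TPs hn) as [Th [TTh [hc [X [[n hn'] hX]]]]].
      apply (Hall n X hn'). apply (lab_to _ _ _ hX); auto. }
    assert (Hs : GTL (Imp (And a (Next th)) th)).
    { apply completeness. intros Ps TPs h. apply NNPP; intro hn.
      destruct (i3 Ps TPs hn) as [Th [TTh [hc [X [[n hn'] hX]]]]].
      destruct (pt_ex Sg (csucc Th) (csucc_tinf Th TTh)) as [Y hY].
      apply (i4 (csucc Th) (csucc_tinf Th TTh)). exists Y. split; auto.
      exists (S n). apply (iter_snoc _ n w X Y); auto. apply R0_Rplus. exists Th; auto.
      apply hc. apply (tand Ps TPs) in h. apply h. }
    destruct (mem_some _ w) as [P HP]. assert (TP := mem_tinf _ _ _ HP).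
    apply (i4 P TP). exists w. split; auto. exists 0; simpl; auto.
    apply (t1 P TP (Until a b)). apply (lab_of _ _ _ HP Hu).
    apply (W_ind Next Glob Until g_fut g_necG); auto.
  - intros w a b Hu. apply NNPP; intro Hno.
    assert (HS := lab_Sg _ _ Hu). pose proof (Hsub _ HS) as [sa sb].
    assert (Hall : forall n v, iter_rel (Rplus Sg) n v w -> ~ qlab Sg v b).
    { intros n v h h'. apply Hno; eauto. }
    set (D := fun X => exists n, iter_rel (Rplus Sg) n X w).
    destruct (omega_forms (fun Th => exists X, D X /\ mem Sg X Th) (DP_inv D)) as [psi [th [_ [_ [i3 i4]]]]].
    assert (Hb : GTL (Imp b th)).
    { apply completeness. intros Ps TPs h. apply NNPP; intro hn.
      destruct (i3 Ps TPs hn) as [Th [TTh [hc [X [[n hn'] hX]]]]].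
      apply (Hall n X hn'). apply (lab_to _ _ _ hX); auto. }
    assert (Hs : GTL (Imp (And a (Prev th)) th)).
    { apply completeness. intros Ps TPs h. apply NNPP; intro hn.
      destruct (i3 Ps TPs hn) as [Th [TTh [hc [X [[n hn'] hX]]]]].
      destruct (pt_ex Sg (cpred Th) (cpred_tinf Th TTh)) as [Y hY].
      apply (i4 (cpred Th) (cpred_tinf Th TTh)). exists Y. split; auto.
      exists (S n). exists X. split; auto. apply R0_Rplus. exists (cpred Th). split; auto.
      rewrite csucc_cpred; auto.
      apply hc. apply (tand Ps TPs) in h. apply h. }
    destruct (mem_some _ w) as [P HP]. assert (TP := mem_tinf _ _ _ HP).
    apply (i4 P TP). exists w. split; auto. exists 0; simpl; auto.
    apply (t1 P TP (Since a b)). apply (lab_of _ _ _ HP Hu).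
    apply (W_ind Prev Hist Since g_past g_necH); auto.
Qed.
End Omega.
End Main.

Theorem corollary10p3 :
  forall Sg : form -> Prop,
    finite_set Sg -> subform_closed Sg ->
    quasimodel Sg (qle Sg) (qlab Sg) (Rplus Sg).
Proof.
  intros Sg [l Hl] Hsub. split.
  - split. apply lab_space; auto. split. apply convex. split. apply confluent. split. apply biserial.
    apply sensible_R; auto.
  - apply (omega Sg Hsub l Hl).
Qed.
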